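(* In the monoid $M$ defined below, the set $I=C\cup D\cup E\cup\{0\}$, where $C=\{a^pc_i:p,i\in\mathbb{Z}\}$, $D=\{a^pd:p\in\mathbb{Z}\}$, $E=\{a^pe:p\in\mathbb{Z}\}$, is an rf-compatible ideal of $M$, and $N=(M\setminus I)\cup\{0\}=\{a^p\}\cup\{a^pb_i\}\cup\{0\}$ is a submonoid of $M$.
   Context: Let $\tau:\mathbb{Z}\setminus\{0\}\to\mathbb{Z}$, $\tau(2^k(2r+1))=\frac{2}{3}(2^{2\lceil k/2\rceil}-1)$ ($k,r\in\mathbb{Z}$, $k\ge0$). Let $M$ be the commutative monoid with zero $0$ given by generators $a,a^{-1},b_i,c_i$ ($i\in\mathbb{Z}$), $d,e$ and relations $aa^{-1}=a^{-1}a=1$; $b_ic_j=d$ if $i=j$ and $b_ic_j=a^{\tau(j-i)}e$ if $i\neq j$; and $b_ib_j=b_id=b_ie=c_jc_k=c_jd=c_je=dd=de=ee=0$ for all $i,j,k\in\mathbb{Z}$. Its elements have distinct normal forms $a^p$, $a^pb_i$, $a^pc_i$, $a^pd$, $a^pe$ ($p,i\in\mathbb{Z}$) and $0$. An ideal $I$ of a monoid $M$ is rf-compatible with $M$ if for any two distinct $s,t\in I$ there is a congruence $\rho$ of finite index on $I$ with $s/\rho\neq t/\rho$ such that $\rho\cup\Delta_M$ is a congruence on $M$, where $\Delta_M=\{(x,x):x\in M\}$. *)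

(* Defs.v *)
From Stdlib Require Import ZArith List.
Open Scope Z_scope.

Fixpoint pval2 (p : positive) : nat :=
  match p with xO q => S (pval2 q) | _ => O end.

(* tau(2^k(2r+1)) = 2/3 (2^(2 ceil(k/2)) - 1), for n <> 0
   (the value at 0 is irrelevant and never used). *)
Definition tau (n : Z) : Z :=
  let k := pval2 (Z.to_pos (Z.abs n)) in
  (2 * (2 ^ (2 * Z.of_nat ((k + 1) / 2)) - 1)) / 3.

(* Elements of M, by their normal forms:
   A p = a^p, B p i = a^p b_i, C p i = a^p c_i, D p = a^p d, E p = a^p e, Zero = 0 *)
Inductive elt : Type :=
| A (p : Z)
| B (p i : Z)
| C (p i : Z)
| D (p : Z)
| E (p : Z)
| Zero.

Definition shift (q : Z) (x : elt) : elt :=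
  match x with
  | A p => A (p + q)
  | B p i => B (p + q) i
  | C p i => C (p + q) i
  | D p => D (p + q)
  | E p => E (p + q)
  | Zero => Zero
  end.

(* b_i c_j = d if i = j, a^{tau(j-i)} e otherwise *)
Definition bc (p i q j : Z) : elt :=
  if Z.eq_dec i j then D (p + q) else E (p + q + tau (j - i)).

Definition Mmul (x y : elt) : elt :=
  match x, y with
  | A p, _ => shift p y
  | _, A q => shift q x
  | B p i, C q j => bc p i q j
  | C q j, B p i => bc p i q j
  | _, _ => Zero
  end.

Definition Mone : elt := A 0.

Definition inI (x : elt) : Prop :=
  match x with C _ _ | D _ | E _ | Zero => True | _ => False end.

Definition inN (x : elt) : Prop := ~ inI x \/ x = Zero.

Definition is_ideal {T : Type} (mul : T -> T -> T) (P : T -> Prop) : Prop :=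
  (exists x, P x) /\ (forall x m, P x -> P (mul x m) /\ P (mul m x)).

Definition is_submonoid {T : Type} (mul : T -> T -> T) (one : T) (P : T -> Prop) : Prop :=
  P one /\ (forall x y, P x -> P y -> P (mul x y)).

Definition is_congruence_on {T : Type} (mul : T -> T -> T) (P : T -> Prop)
  (rho : T -> T -> Prop) : Prop :=
  (forall x y, rho x y -> P x /\ P y) /\
  (forall x, P x -> rho x x) /\
  (forall x y, rho x y -> rho y x) /\
  (forall x y z, rho x y -> rho y z -> rho x z) /\
  (forall x y z, rho x y -> P z -> rho (mul z x) (mul z y) /\ rho (mul x z) (mul y z)).

Definition finite_index_on {T : Type} (P : T -> Prop) (rho : T -> T -> Prop) : Prop :=
  exists l : list T, forall x, P x -> exists y, In y l /\ rho x y.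

Definition rf_compatible {T : Type} (mul : T -> T -> T) (I : T -> Prop) : Prop :=
  forall s t, I s -> I t -> s <> t ->
    exists rho : T -> T -> Prop,
      is_congruence_on mul I rho /\ finite_index_on I rho /\ ~ rho s t /\
      is_congruence_on mul (fun _ => True) (fun x y => rho x y \/ x = y).

(* Main.v *)
Require Import Defs.
From Stdlib Require Import ZArith List Lia.
Open Scope Z_scope.

Lemma modeq_iff m a b : 0 < m -> (a mod m = b mod m <-> (m | a - b)).
Proof.
  intros Hm; split; intros H.
  - exists (a/m - b/m). pose proof (Z.div_mod a m ltac:(lia)).
    pose proof (Z.div_mod b m ltac:(lia)). nia.
  - destruct H as [k Hk]. replace a with (b + k*m) by lia.
    apply Z.mod_add; lia.
Qed.

Lemma small_div m d : 0 < m -> (m | d) -> Z.abs d < m -> d = 0.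
Proof. intros Hm [k Hk] Ha. subst. rewrite Z.abs_mul in Ha.
  destruct (Z.eq_dec k 0); [subst; ring|]. assert (1 <= Z.abs k) by lia. rewrite (Z.abs_eq m) in Ha by lia. nia. Qed.

Lemma pval2_spec : forall k p, (k <= pval2 p)%nat <-> (2^(Z.of_nat k) | Zpos p).
Proof.
  induction k; intros p.
  - simpl. split; intros; [apply Z.divide_1_l | lia].
  - destruct p as [q|q|]; cbn [pval2].
    + split; intros H; [ | exfalso].
      * exfalso; lia.
      * apply (Z.divide_trans 2) in H.
        -- destruct H as [x Hx]. lia.
        -- rewrite Nat2Z.inj_succ, Z.pow_succ_r by lia. exists (2^Z.of_nat k). ring.
    + rewrite Nat2Z.inj_succ, Z.pow_succ_r by lia.
      change (Zpos q~0) with (2 * Zpos q).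
      rewrite Z.mul_divide_cancel_l by lia. rewrite <- IHk. lia.
    + split; intros H; [exfalso; lia | exfalso].
      apply (Z.divide_trans 2) in H.
      * destruct H as [x Hx]. lia.
      * rewrite Nat2Z.inj_succ, Z.pow_succ_r by lia. exists (2^Z.of_nat k). ring.
Qed.

Definition vv (n : Z) : nat := pval2 (Z.to_pos (Z.abs n)).

Lemma vv_spec n k : n <> 0 -> ((k <= vv n)%nat <-> (2^(Z.of_nat k) | n)).
Proof.
  intros Hn. unfold vv. rewrite pval2_spec, Z2Pos.id by lia.
  apply Z.divide_abs_r.
Qed.

Lemma pow_div a b : (a <= b)%nat -> (2^(Z.of_nat a) | 2^(Z.of_nat b)).
Proof.
  intros H. exists (2^(Z.of_nat b - Z.of_nat a)).
  rewrite <- Z.pow_add_r by lia. f_equal. lia.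
Qed.

Lemma Lv K n n' : n <> 0 -> n' <> 0 -> (2^(Z.of_nat K) | n - n') -> (vv n < K)%nat -> vv n' = vv n.
Proof.
  intros Hn Hn' Hd Hlt.
  assert (H1 : (2^(Z.of_nat (vv n)) | n)) by (apply vv_spec; lia).
  assert (H2 : (2^(Z.of_nat (vv n)) | n')).
  { replace n' with (n - (n - n')) by ring. apply Z.divide_sub_r; auto.
    apply Z.divide_trans with (2^(Z.of_nat K)); [apply pow_div; lia| exact Hd]. }
  apply vv_spec in H2; auto.
  destruct (Nat.le_gt_cases (vv n') (vv n)) as [H|H]; [lia|].
  exfalso.
  assert (H3 : (2^(Z.of_nat (S (vv n))) | n')) by (apply vv_spec; lia).
  assert (H4 : (2^(Z.of_nat (S (vv n))) | n)).
  { assert (E: n = (n - n') + n') by ring. rewrite E at 2. apply Z.divide_add_r; auto.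
    apply Z.divide_trans with (2^(Z.of_nat K)); [apply pow_div; lia| exact Hd]. }
  apply vv_spec in H4; auto. lia.
Qed.

Lemma Vcase K n n' : n <> 0 -> n' <> 0 -> (2^(Z.of_nat K) | n - n') ->
  vv n = vv n' \/ ((K <= vv n)%nat /\ (K <= vv n')%nat).
Proof.
  intros Hn Hn' Hd.
  destruct (Nat.lt_ge_cases (vv n) K).
  - left. symmetry. eapply Lv; eauto.
  - destruct (Nat.lt_ge_cases (vv n') K).
    + left. eapply Lv; eauto. replace (n' - n) with (-(n - n')) by ring.
      apply Z.divide_opp_r; auto.
    + right; auto.
Qed.

Lemma pow4 : forall c : nat, exists m, 2^(2*Z.of_nat c) = 3*m+1.
Proof.
  induction c.
  - exists 0. reflexivity.
  - destruct IHc as [m Hm]. exists (4*m+1).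
    rewrite Nat2Z.inj_succ. replace (2 * Z.succ (Z.of_nat c)) with (2*Z.of_nat c + 2) by lia.
    rewrite Z.pow_add_r by lia. rewrite Hm. replace (2^2) with 4 by reflexivity. ring.
Qed.

Lemma tau_eq n : tau n = (2 * (2 ^ (2 * Z.of_nat ((vv n + 1) / 2)) - 1)) / 3.
Proof. reflexivity. Qed.

Lemma tau3 N n : (2*N <= vv n)%nat -> (2^(Z.of_nat N) | 3 * tau n + 2).
Proof.
  intros H. rewrite tau_eq.
  set (c := ((vv n + 1)/2)%nat).
  assert (Hc : (N <= c)%nat) by (apply Nat.div_le_lower_bound; lia).
  destruct (pow4 c) as [m Hm]. rewrite Hm.
  replace (2 * (3 * m + 1 - 1)) with ((2*m)*3) by ring.
  rewrite Z.div_mul by lia.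
  replace (3 * (2*m) + 2) with (2 * 2^(2*Z.of_nat c)) by lia.
  apply Z.divide_mul_r.
  replace (2 * Z.of_nat c) with (Z.of_nat (2*c)) by lia. apply pow_div. lia.
Qed.

Lemma div3 N : forall x, (2^(Z.of_nat N) | 3 * x) -> (2^(Z.of_nat N) | x).
Proof.
  induction N; intros x H.
  - apply Z.divide_1_l.
  - rewrite Nat2Z.inj_succ, Z.pow_succ_r in * by lia.
    assert (H2 : (2 | 3 * x)) by (apply Z.divide_trans with (2 * 2^Z.of_nat N); auto; apply Z.divide_factor_l).
    destruct H2 as [k Hk]. assert (Ex : x = 2 * (k - x)) by lia.
    rewrite Ex in *. apply Z.mul_divide_mono_l. apply IHN.
    replace (3 * (2 * (k - x))) with (2 * (3 * (k - x))) in H by ring.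
    apply Z.mul_divide_cancel_l in H; lia || auto.
Qed.

Lemma tau_cong N n n' : n <> 0 -> n' <> 0 -> (2^(Z.of_nat (2*N)) | n - n') ->
  (2^(Z.of_nat N) | tau n - tau n').
Proof.
  intros Hn Hn' Hd.
  destruct (Vcase _ _ _ Hn Hn' Hd) as [E|[E1 E2]].
  - rewrite !tau_eq, E. rewrite Z.sub_diag. apply Z.divide_0_r.
  - apply div3. replace (3 * (tau n - tau n')) with ((3*tau n + 2) - (3 * tau n' + 2)) by ring.
    apply Z.divide_sub_r; apply tau3; auto.
Qed.
Definition Mn (N : nat) : Z := 2^(Z.of_nat N).
Definition Mk (N : nat) : Z := 2^(Z.of_nat (2*N)).
Definition Ln (N : nat) : Z := tau (Mk N).

Definition key (N : nat) (x : elt) : elt :=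
  match x with
  | C q j => C (q mod Mn N) (j mod Mk N)
  | D p => E ((p + Ln N) mod Mn N)
  | E p => E (p mod Mn N)
  | _ => x
  end.

Definition rho N x y := inI x /\ inI y /\ key N x = key N y.

Lemma Mn_pos N : 0 < Mn N. Proof. unfold Mn. apply Z.pow_pos_nonneg; lia. Qed.
Lemma Mk_pos N : 0 < Mk N. Proof. unfold Mk. apply Z.pow_pos_nonneg; lia. Qed.

Lemma Mmul_comm x y : Mmul x y = Mmul y x.
Proof. destruct x, y; simpl; try reflexivity; f_equal; ring. Qed.

Lemma key_shift N q x : inI x -> key N (Defs.shift q x) = key N (Defs.shift q (key N x)).
Proof.
  pose proof (Mn_pos N). pose proof (Mk_pos N).
  destruct x; simpl; intros Hx; try contradiction; try reflexivity; f_equal;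
   try rewrite Z.mod_mod by lia; try rewrite Z.add_mod_idemp_l by lia; try reflexivity.
  f_equal. ring.
Qed.

Lemma modeq_of_div m a b : 0 < m -> (m | a - b) -> a mod m = b mod m.
Proof. intros. apply modeq_iff; auto. Qed.

Lemma div_of_modeq m a b : 0 < m -> a mod m = b mod m -> (m | a - b).
Proof. intros. apply modeq_iff; auto. Qed.

Lemma key_bc N p i q j q' j' : q mod Mn N = q' mod Mn N -> j mod Mk N = j' mod Mk N ->
  key N (bc p i q j) = key N (bc p i q' j').
Proof.
  pose proof (Mn_pos N) as HM. pose proof (Mk_pos N) as HK.
  intros Hq Hj. apply div_of_modeq in Hq; auto. apply div_of_modeq in Hj; auto.
  assert (HKK : (Mk N | Mk N)) by apply Z.divide_refl.
  unfold bc. destruct (Z.eq_dec i j), (Z.eq_dec i j'); simpl; f_equal; apply modeq_of_div; auto.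
  - replace (p + q + Ln N - (p + q' + Ln N)) with (q - q') by ring; auto.
  - subst j. replace (p + q + Ln N - (p + q' + tau (j' - i))) with ((q - q') + (tau (Mk N) - tau (j' - i))) by (unfold Ln; ring).
    apply Z.divide_add_r; auto. apply tau_cong; try lia.
    replace (Mk N - (j' - i)) with (Mk N + (i - j')) by ring. apply Z.divide_add_r; auto.
  - subst j'. replace (p + q + tau (j - i) - (p + q' + Ln N)) with ((q - q') + (tau (j - i) - tau (Mk N))) by (unfold Ln; ring).
    apply Z.divide_add_r; auto. apply tau_cong; try lia.
    replace (j - i - Mk N) with ((j - i) - Mk N) by ring. apply Z.divide_sub_r; auto.
  - replace (p + q + tau (j - i) - (p + q' + tau (j' - i))) with ((q - q') + (tau (j - i) - tau (j' - i))) by ring.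
    apply Z.divide_add_r; auto. apply tau_cong; try lia.
    replace (j - i - (j' - i)) with (j - j') by ring. auto.
Qed.

Lemma inI_shift q x : inI x -> inI (Defs.shift q x).
Proof. destruct x; simpl; auto. Qed.

Lemma inI_bc p i q j : inI (bc p i q j).
Proof. unfold bc; destruct (Z.eq_dec i j); simpl; auto. Qed.

Lemma rho_left N x y z : rho N x y -> rho N (Mmul z x) (Mmul z y) \/ Mmul z x = Mmul z y.
Proof.
  intros [Hx [Hy Hk]]. destruct z as [p|p i|p i|p|p|].
  - left. simpl. split; [apply inI_shift; auto|split; [apply inI_shift; auto|]].
    rewrite (key_shift N p x Hx), (key_shift N p y Hy), Hk. reflexivity.
  - destruct x; try contradiction; destruct y; try contradiction; simpl in Hk; try discriminate;
      simpl; auto.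
    left. injection Hk; intros. split; [apply inI_bc|split; [apply inI_bc|]].
    apply key_bc; auto.
  - destruct x; try contradiction; destruct y; try contradiction; right; reflexivity.
  - destruct x; try contradiction; destruct y; try contradiction; right; reflexivity.
  - destruct x; try contradiction; destruct y; try contradiction; right; reflexivity.
  - destruct x; try contradiction; destruct y; try contradiction; right; reflexivity.
Qed.

Lemma rho_cong_I N : is_congruence_on Mmul inI (rho N).
Proof.
  split; [intros x y [? [? ?]]; auto|].
  split; [intros x Hx; repeat split; auto|].
  split; [intros x y [? [? ?]]; repeat split; auto|].
  split; [intros x y z [? [? H1]] [? [? H2]]; repeat split; auto; congruence|].
  intros x y z [Hx [Hy Hk]] Hz.
  assert (E : forall u w, inI u -> inI w -> Mmul u w = Zero).
  { intros u w Hu Hw. destruct u; try contradiction; destruct w; try contradiction; reflexivity. }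
  rewrite !(E z), !(E _ z) by auto. repeat split; simpl; auto.
Qed.

Definition reps (N : nat) : list elt :=
  Zero :: map (fun a => E (Z.of_nat a)) (seq 0 (Z.to_nat (Mn N))) ++
  flat_map (fun a => map (fun b => C (Z.of_nat a) (Z.of_nat b)) (seq 0 (Z.to_nat (Mk N))))
    (seq 0 (Z.to_nat (Mn N))).

Lemma in_seqZ a m : 0 < m -> In (Z.to_nat (a mod m)) (seq 0 (Z.to_nat m)).
Proof. intros H. apply in_seq. pose proof (Z.mod_pos_bound a m H). lia. Qed.

Lemma rho_fin N : finite_index_on inI (rho N).
Proof.
  pose proof (Mn_pos N) as HM. pose proof (Mk_pos N) as HK.
  exists (reps N). intros x Hx. exists (key N x).
  destruct x; try contradiction.
  - split.
    + unfold reps. right. apply in_or_app. right. apply in_flat_map.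
      exists (Z.to_nat (p mod Mn N)). split; [apply in_seqZ; auto|].
      apply in_map_iff. exists (Z.to_nat (i mod Mk N)). split; [|apply in_seqZ; auto].
      pose proof (Z.mod_pos_bound p _ HM). pose proof (Z.mod_pos_bound i _ HK).
      simpl. f_equal; lia.
    + split; auto. simpl. split; auto. rewrite !Z.mod_mod by lia. reflexivity.
  - split.
    + unfold reps. right. apply in_or_app. left. apply in_map_iff.
      exists (Z.to_nat ((p + Ln N) mod Mn N)). split; [|apply in_seqZ; auto].
      pose proof (Z.mod_pos_bound (p + Ln N) _ HM). simpl. f_equal; lia.
    + split; auto. simpl. split; auto. rewrite !Z.mod_mod by lia. reflexivity.
  - split.
    + unfold reps. right. apply in_or_app. left. apply in_map_iff.
      exists (Z.to_nat (p mod Mn N)). split; [|apply in_seqZ; auto].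
      pose proof (Z.mod_pos_bound p _ HM). simpl. f_equal; lia.
    + split; auto. simpl. split; auto. rewrite !Z.mod_mod by lia. reflexivity.
  - split; [left; reflexivity|]. simpl. repeat split; auto.
Qed.

Lemma rho_cong_M N : is_congruence_on Mmul (fun _ => True) (fun x y => rho N x y \/ x = y).
Proof.
  split. { auto. }
  split. { auto. }
  split.
  { intros x y [[? [? ?]]|?].
    - left; repeat split; auto.
    - right; auto. }
  split.
  { intros x y z [[? [? H1]]|?] [[? [? H2]]|?]; subst; auto;
    left; repeat split; auto; congruence. }
  intros x y z [H|H] _.
  - split; [apply rho_left; auto|]. rewrite (Mmul_comm x), (Mmul_comm y). apply rho_left; auto.
  - subst. auto.
Qed.

Lemma Mn_big X : X < Mn (Z.to_nat X + 1).
Proof.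
  unfold Mn. set (n := Z.of_nat (Z.to_nat X + 1)).
  assert (n < 2^n) by (apply Z.pow_gt_lin_r; lia). lia.
Qed.

Lemma Mn_le_Mk N : Mn N <= Mk N.
Proof. unfold Mn, Mk. apply Z.pow_le_mono_r; lia. Qed.

Lemma modeq_eq m a b : 0 < m -> Z.abs (a - b) < m -> a mod m = b mod m -> a = b.
Proof.
  intros Hm Ha H. apply div_of_modeq in H; auto. apply small_div in H; auto. lia.
Qed.

Lemma sep s t : inI s -> inI t -> s <> t -> exists N, key N s <> key N t.
Proof.
  intros Hs Ht Hst.
  destruct s as [|p|q j|p|p|]; try contradiction; destruct t as [|p'|q' j'|p'|p'|]; try contradiction;
    try (exists O; simpl; discriminate).
  - set (N := (Z.to_nat (Z.abs (q - q') + Z.abs (j - j')) + 1)%nat).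
    exists N. simpl. intros H. injection H; intros H1 H2.
    assert (HB : (Z.abs (q - q') + Z.abs (j - j')) < Mn N) by apply Mn_big. pose proof (Mn_le_Mk N).
    pose proof (Mn_pos N).
    apply modeq_eq in H1; [|lia|lia].
    apply modeq_eq in H2; [|lia|lia]. subst. auto.
  - set (N := (Z.to_nat (Z.abs (p - p')) + 1)%nat).
    exists N. simpl. intros H. injection H; intros H1.
    assert (HB : (Z.abs (p - p')) < Mn N) by apply Mn_big. pose proof (Mn_pos N).
    apply modeq_eq in H1; [|lia|lia]. apply Hst. f_equal. lia.
  - set (N := (Z.to_nat (Z.abs (3 * (p - p') - 2)) + 1)%nat).
    exists N. simpl. intros H. injection H; intros H1.
    assert (HB : (Z.abs (3 * (p - p') - 2)) < Mn N) by apply Mn_big. pose proof (Mn_pos N) as HM.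
    apply div_of_modeq in H1; auto.
    assert (H3 : (Mn N | 3 * Ln N + 2)).
    { apply tau3. apply vv_spec. pose proof (Mk_pos N); lia. apply Z.divide_refl. }
    assert (H4 : (Mn N | 3 * (p - p') - 2)).
    { replace (3 * (p - p') - 2) with (3 * (p + Ln N - p') - (3 * Ln N + 2)) by ring.
      apply Z.divide_sub_r; auto. apply Z.divide_mul_r; auto. }
    apply small_div in H4; [lia|lia|lia].
  - set (N := (Z.to_nat (Z.abs (3 * (p' - p) - 2)) + 1)%nat).
    exists N. simpl. intros H. injection H; intros H1.
    assert (HB : (Z.abs (3 * (p' - p) - 2)) < Mn N) by apply Mn_big. pose proof (Mn_pos N) as HM.
    apply div_of_modeq in H1; auto.
    assert (H3 : (Mn N | 3 * Ln N + 2)).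
    { apply tau3. apply vv_spec. pose proof (Mk_pos N); lia. apply Z.divide_refl. }
    assert (H4 : (Mn N | 3 * (p' - p) - 2)).
    { replace (3 * (p' - p) - 2) with (- (3 * (p - (p' + Ln N))) - (3 * Ln N + 2)) by ring.
      apply Z.divide_sub_r; auto. apply Z.divide_opp_r. apply Z.divide_mul_r; auto. }
    apply small_div in H4; [lia|lia|lia].
  - set (N := (Z.to_nat (Z.abs (p - p')) + 1)%nat).
    exists N. simpl. intros H. injection H; intros H1.
    assert (HB : (Z.abs (p - p')) < Mn N) by apply Mn_big. pose proof (Mn_pos N).
    apply modeq_eq in H1; [|lia|lia]. apply Hst. f_equal. lia.
Qed.

Theorem mainTheorem16 :
  is_ideal Mmul inI /\ rf_compatible Mmul inI /\ is_submonoid Mmul Mone inN.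
Proof.
  split; [|split].
  - split; [exists Zero; simpl; auto|].
    intros x m Hx. rewrite (Mmul_comm m x). split;
    destruct x; try contradiction; destruct m; simpl; auto; apply inI_bc.
  - intros s t Hs Ht Hst. destruct (sep s t Hs Ht Hst) as [N HN].
    exists (rho N). split; [apply rho_cong_I|]. split; [apply rho_fin|]. split.
    + intros [_ [_ H]]. auto.
    + apply rho_cong_M.
  - split.
    + left. simpl. auto.
    + intros x y Hx Hy. unfold inN in *.
      destruct x; try (destruct Hx as [Hx|Hx]; [simpl in Hx; tauto|discriminate]);
      destruct y; try (destruct Hy as [Hy|Hy]; [simpl in Hy; tauto|discriminate]);
      simpl; try (right; reflexivity); left; simpl; tauto.
Qed.
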